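(* The full subcategory of $\mathbb{B}\text{-}\mathbf{Top}$ consisting of Hausdorff $\mathbb{B}$-topological spaces is reflective.
   Context: $\mathbb{B}=\{0,1,tt,ff\}$ is the four-element Boolean algebra with bottom $0$, top $1$, and $tt,ff$ incomparable complements; $\neg$ its complement, $a\to b=\neg a\vee b$. A $\mathbb{B}$-topology on $X$ is $\tau\subseteq\mathbb{B}^X$ containing all constant maps and closed under arbitrary pointwise joins and finite pointwise meets; $\mu$ is closed if $\neg\mu\in\tau$. $\mathbb{B}\text{-}\mathbf{Top}$ is the category of $\mathbb{B}$-topological spaces with continuous maps $f\colon(X,\tau_X)\to(Y,\tau_Y)$, i.e. $\lambda\circ f\in\tau_X$ for all $\lambda\in\tau_Y$. Specialization $\mathbb{B}$-order: $\Omega(\tau)(x,y)=\bigwedge_{\lambda\in\tau}(\lambda(x)\to\lambda(y))$. The product $(X,\tau)\times(X,\tau)$ is $X\times X$ with the $\mathbb{B}$-topology generated by the constants and $\{\lambda\circ\pi_1,\lambda\circ\pi_2:\lambda\in\tau\}$. $(X,\tau)$ is $R_1$ if $\Omega(\tau)$ is a closed set of $(X,\tau)\times(X,\tau)$, $T_0$ if $\Omega(\tau)(x,y)=1=\Omega(\tau)(y,x)$ implies $x=y$, and Hausdorff if $T_0$ and $R_1$. *)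

(* Defs.v *)
From Stdlib Require Import ClassicalEpsilon.

Inductive B4 : Type := b0 | b1 | btt | bff.

Definition Ble (a b : B4) : Prop :=
  match a, b with
  | b0, _ => True
  | _, b1 => True
  | btt, btt => True
  | bff, bff => True
  | _, _ => False
  end.

Definition Bjoin (a b : B4) : B4 :=
  match a, b with
  | b0, x => x
  | x, b0 => x
  | b1, _ => b1
  | _, b1 => b1
  | btt, btt => btt
  | bff, bff => bff
  | _, _ => b1
  end.

Definition Bmeet (a b : B4) : B4 :=
  match a, b with
  | b1, x => x
  | x, b1 => x
  | b0, _ => b0
  | _, b0 => b0
  | btt, btt => btt
  | bff, bff => bff
  | _, _ => b0
  end.

Definition Bneg (a : B4) : B4 :=
  match a with b0 => b1 | b1 => b0 | btt => bff | bff => btt end.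

Definition Bimp (a b : B4) : B4 := Bjoin (Bneg a) b.

Definition dec (P : Prop) : bool :=
  if excluded_middle_informative P then true else false.

Definition Bsup (P : B4 -> Prop) : B4 :=
  if dec (P b1 \/ (P btt /\ P bff)) then b1
  else if dec (P btt) then btt
  else if dec (P bff) then bff
  else b0.

Definition Binf (P : B4 -> Prop) : B4 :=
  if dec (P b0 \/ (P btt /\ P bff)) then b0
  else if dec (P btt) then btt
  else if dec (P bff) then bff
  else b1.

Definition Btopology {X : Type} (tau : (X -> B4) -> Prop) : Prop :=
  (forall c : B4, tau (fun _ => c)) /\
  (forall S : (X -> B4) -> Prop, (forall l, S l -> tau l) ->
     tau (fun x => Bsup (fun b => exists l, S l /\ l x = b))) /\
  (forall l m, tau l -> tau m -> tau (fun x => Bmeet (l x) (m x))).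

Definition Bclosed {X : Type} (tau : (X -> B4) -> Prop) (mu : X -> B4) : Prop :=
  tau (fun x => Bneg (mu x)).

Definition Bcontinuous {X Y : Type} (tX : (X -> B4) -> Prop)
  (tY : (Y -> B4) -> Prop) (f : X -> Y) : Prop :=
  forall l, tY l -> tX (fun x => l (f x)).

Definition Omega {X : Type} (tau : (X -> B4) -> Prop) (x y : X) : B4 :=
  Binf (fun b => exists l, tau l /\ Bimp (l x) (l y) = b).

Definition generated {X : Type} (S : (X -> B4) -> Prop) : (X -> B4) -> Prop :=
  fun mu => forall T : (X -> B4) -> Prop, Btopology T ->
    (forall l, S l -> T l) -> T mu.

Definition prod_top {X : Type} (tau : (X -> B4) -> Prop) : (X * X -> B4) -> Prop :=
  generated (fun nu => (exists c : B4, nu = fun _ => c) \/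
                       exists l, tau l /\ (nu = (fun p => l (fst p)) \/
                                           nu = (fun p => l (snd p)))).

Definition R1 {X : Type} (tau : (X -> B4) -> Prop) : Prop :=
  Bclosed (prod_top tau) (fun p => Omega tau (fst p) (snd p)).

Definition T0 {X : Type} (tau : (X -> B4) -> Prop) : Prop :=
  forall x y : X, Omega tau x y = b1 -> Omega tau y x = b1 -> x = y.

Definition Hausdorff {X : Type} (tau : (X -> B4) -> Prop) : Prop :=
  T0 tau /\ R1 tau.

(* Main.v *)
Require Import Defs.
From Stdlib Require Import ClassicalEpsilon FunctionalExtensionality PropExtensionality ProofIrrelevance.

Lemma Ble_refl a : Ble a a. Proof. destruct a; simpl; auto. Qed.
Lemma Ble_trans a b c : Ble a b -> Ble b c -> Ble a c.
Proof. destruct a, b, c; simpl; tauto. Qed.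
Lemma Ble_antisym a b : Ble a b -> Ble b a -> a = b.
Proof. destruct a, b; simpl; tauto. Qed.
Lemma Ble_top a : Ble a b1. Proof. destruct a; simpl; auto. Qed.
Lemma Ble_top_eq a : Ble b1 a -> a = b1. Proof. destruct a; simpl; tauto. Qed.
Lemma Bneg_swap a b : Ble (Bneg a) b -> Ble (Bneg b) a.
Proof. destruct a, b; simpl; tauto. Qed.
Lemma Bneg_anti a b : Ble a b -> Ble (Bneg b) (Bneg a).
Proof. destruct a, b; simpl; tauto. Qed.
Lemma Bneg_swap2 a b : Ble a (Bneg b) -> Ble b (Bneg a).
Proof. destruct a, b; simpl; tauto. Qed.
Lemma Bimp_refl c : Bimp c c = b1. Proof. destruct c; reflexivity. Qed.
Lemma resid1 r a b : Ble r (Bimp a b) -> Ble (Bmeet r a) b.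
Proof. destruct r, a, b; simpl; tauto. Qed.
Lemma resid2 r a b : Ble (Bmeet r a) b -> Ble a (Bimp r b).
Proof. destruct r, a, b; simpl; tauto. Qed.
Lemma resid3 r a b : Ble a (Bimp r b) -> Ble r (Bimp a b).
Proof. destruct r, a, b; simpl; tauto. Qed.
Lemma meet_lemma r a b c d : Ble r (Bimp a b) -> Ble r (Bimp c d) ->
  Ble r (Bimp (Bmeet a c) (Bmeet b d)).
Proof. destruct r, a, b, c, d; simpl; tauto. Qed.

Lemma Bsup_ub (P : B4 -> Prop) b : P b -> Ble b (Bsup P).
Proof.
  intro H; unfold Bsup, dec;
  repeat destruct excluded_middle_informative; destruct b; simpl in *; tauto.
Qed.
Lemma Bsup_lub (P : B4 -> Prop) c : (forall a, P a -> Ble a c) -> Ble (Bsup P) c.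
Proof.
  intro H; pose proof (H b1); pose proof (H btt); pose proof (H bff);
  unfold Bsup, dec;
  repeat destruct excluded_middle_informative; destruct c; simpl in *; tauto.
Qed.
Lemma Binf_lb (P : B4 -> Prop) b : P b -> Ble (Binf P) b.
Proof.
  intro H; unfold Binf, dec;
  repeat destruct excluded_middle_informative; destruct b; simpl in *; tauto.
Qed.
Lemma Binf_glb (P : B4 -> Prop) c : (forall a, P a -> Ble c a) -> Ble c (Binf P).
Proof.
  intro H; pose proof (H b0); pose proof (H btt); pose proof (H bff);
  unfold Binf, dec;
  repeat destruct excluded_middle_informative; destruct c; simpl in *; tauto.
Qed.
Lemma Bsup_ext (P Q : B4 -> Prop) : (forall b, P b <-> Q b) -> Bsup P = Bsup Q.
Proof.
  intro H; apply Ble_antisym; apply Bsup_lub; intros a Ha; apply Bsup_ub; apply H; auto.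
Qed.

Lemma Omega_lb {X} (tau : (X -> B4) -> Prop) l x y :
  tau l -> Ble (Omega tau x y) (Bimp (l x) (l y)).
Proof. intro H; apply Binf_lb; eauto. Qed.
Lemma Omega_glb {X} (tau : (X -> B4) -> Prop) x y c :
  (forall l, tau l -> Ble c (Bimp (l x) (l y))) -> Ble c (Omega tau x y).
Proof. intro H; apply Binf_glb; intros a [l [Hl <-]]; auto. Qed.

Lemma generated_top {X} (S : (X -> B4) -> Prop) : Btopology (generated S).
Proof.
  split; [|split].
  - intros c T [Hc _] _; apply Hc.
  - intros Sf HS T HT HST; apply (proj1 (proj2 HT)); intros l Hl; apply HS; auto.
  - intros l m Hl Hm T HT HST; apply (proj2 (proj2 HT)); [apply Hl | apply Hm]; auto.
Qed.
Lemma generated_incl {X} (S : (X -> B4) -> Prop) l : S l -> generated S l.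
Proof. intros H T _ HT; auto. Qed.

Lemma pre_top {X Y : Type} (T : (X -> B4) -> Prop) (h : X -> Y) :
  Btopology T -> Btopology (fun mu : Y -> B4 => T (fun x : X => mu (h x))).
Proof.
  intros [Hc [Hj Hm]]; split; [|split].
  - intro c; apply Hc.
  - intros Sf HS.
    pose (S' := fun l' => exists l, Sf l /\ l' = (fun x => l (h x))).
    assert (HT := Hj S' ltac:(intros l' [l [Hl ->]]; apply HS; auto)).
    match goal with |- T ?F => replace F with
      (fun x => Bsup (fun b => exists l, S' l /\ l x = b)) end; auto.
    apply functional_extensionality; intro x; apply Bsup_ext; intro b; split.
    + intros [l' [[l [Hl ->]] E]]; eauto.
    + intros [l [Hl E]]; exists (fun x => l (h x)); split; auto; exists l; auto.
  - intros l m Hl Hm2; apply (Hm _ _ Hl Hm2).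
Qed.

Lemma cont_gen {X Y} (S : (Y -> B4) -> Prop) (T' : (X -> B4) -> Prop) (h : X -> Y) :
  Btopology T' -> (forall s, S s -> T' (fun x => s (h x))) ->
  forall mu, generated S mu -> T' (fun x => mu (h x)).
Proof.
  intros HT HS mu Hmu; apply (Hmu (fun mu => T' (fun x => mu (h x)))); auto.
  apply pre_top; auto.
Qed.

Lemma sig_eq {A} (P : A -> Prop) (a b : sig P) : proj1_sig a = proj1_sig b -> a = b.
Proof. destruct a, b; simpl; intros ->; f_equal; apply proof_irrelevance. Qed.

Section Refl.
Variable X : Type.
Variable tX : (X -> B4) -> Prop.
Hypothesis HX : Btopology tX.

Definition Rel (x x' : X) : Prop :=
  forall (Z : Type) (tZ : (Z -> B4) -> Prop), Btopology tZ -> Hausdorff tZ ->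
  forall f : X -> Z, Bcontinuous tX tZ f -> f x = f x'.
Definition cls (x : X) : X -> Prop := fun x' => Rel x x'.
Definition Yt := {P : X -> Prop | exists x, P = cls x}.
Definition rep (y : Yt) : X :=
  proj1_sig (constructive_indefinite_description _ (proj2_sig y)).
Lemma rep_spec y : proj1_sig y = cls (rep y).
Proof. unfold rep; destruct constructive_indefinite_description; auto. Qed.
Definition eta (x : X) : Yt := exist _ (cls x) (ex_intro _ x eq_refl).

Lemma cls_eq a b : Rel a b -> cls a = cls b.
Proof.
  intro H; apply functional_extensionality; intro z; apply propositional_extensionality;
  unfold cls, Rel in *; split; intros H' Z tZ H1 H2 f Hf;
  specialize (H Z tZ H1 H2 f Hf); specialize (H' Z tZ H1 H2 f Hf); congruence.
Qed.
Lemma eta_rep y : eta (rep y) = y.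
Proof. apply sig_eq; simpl; rewrite rep_spec; auto. Qed.
Lemma f_rep (Z : Type) (tZ : (Z -> B4) -> Prop) f :
  Btopology tZ -> Hausdorff tZ -> Bcontinuous tX tZ f -> forall x, f (rep (eta x)) = f x.
Proof.
  intros H1 H2 Hf x.
  assert (E := rep_spec (eta x)); simpl in E.
  assert (R : cls (rep (eta x)) x) by (rewrite <- E; unfold cls, Rel; auto).
  apply (R Z tZ H1 H2 f Hf).
Qed.

Definition Gen (mu : Yt -> B4) : Prop :=
  exists (Z : Type) (tZ : (Z -> B4) -> Prop) (f : X -> Z),
    Btopology tZ /\ Hausdorff tZ /\ Bcontinuous tX tZ f /\
    exists l, tZ l /\ mu = fun y => l (f (rep y)).
Definition tY := generated Gen.

Lemma gen_in (Z : Type) (tZ : (Z -> B4) -> Prop) f l :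
  Btopology tZ -> Hausdorff tZ -> Bcontinuous tX tZ f -> tZ l ->
  tY (fun y => l (f (rep y))).
Proof.
  intros H1 H2 H3 H4; apply generated_incl; exists Z, tZ, f; split; [exact H1|split; [exact H2|split; [exact H3|exists l; auto]]].
Qed.

Lemma eta_cont : Bcontinuous tX tY eta.
Proof.
  intros l Hl; apply (cont_gen Gen tX eta HX); auto.
  intros s [Z [tZ [f [H1 [H2 [Hf [l' [Hl' ->]]]]]]]].
  replace (fun x => l' (f (rep (eta x)))) with (fun x => l' (f x)).
  - apply Hf; auto.
  - apply functional_extensionality; intro x; rewrite (f_rep Z tZ f); auto.
Qed.

Lemma omega_Z y y' (Z : Type) (tZ : (Z -> B4) -> Prop) f :
  Btopology tZ -> Hausdorff tZ -> Bcontinuous tX tZ f ->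
  Ble (Omega tY y y') (Omega tZ (f (rep y)) (f (rep y'))).
Proof.
  intros H1 H2 Hf; apply Omega_glb; intros l Hl.
  apply (Omega_lb tY (fun y => l (f (rep y)))); apply (gen_in Z tZ); auto.
Qed.

Lemma Y_T0 : T0 tY.
Proof.
  intros y y' E1 E2.
  rewrite <- (eta_rep y), <- (eta_rep y'); apply sig_eq; simpl; apply cls_eq.
  intros Z tZ H1 H2 f Hf; apply H2.
  - apply Ble_top_eq; rewrite <- E1; apply (omega_Z y y' Z tZ); auto.
  - apply Ble_top_eq; rewrite <- E2; apply (omega_Z y' y Z tZ); auto.
Qed.

Definition Sg (nu : Yt * Yt -> B4) : Prop :=
  exists (Z : Type) (tZ : (Z -> B4) -> Prop) (f : X -> Z),
    Btopology tZ /\ Hausdorff tZ /\ Bcontinuous tX tZ f /\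
    nu = fun p => Bneg (Omega tZ (f (rep (fst p))) (f (rep (snd p)))).
Definition sigma (p : Yt * Yt) : B4 := Bsup (fun b => exists nu, Sg nu /\ nu p = b).

Lemma key p : Bneg (Omega tY (fst p) (snd p)) = sigma p.
Proof.
  destruct p as [y y']; simpl; apply Ble_antisym.
  - apply Bneg_swap; apply Omega_glb; intros lam Hlam.
    revert y y'.
    apply (Hlam (fun lam => forall y y', Ble (Bneg (sigma (y, y'))) (Bimp (lam y) (lam y')))).
    + split; [|split].
      * intros c y y'; rewrite Bimp_refl; apply Ble_top.
      * intros Sf HS y y'.
        apply resid3; apply Bsup_lub; intros a [l [Hl <-]].
        apply resid2; apply Ble_trans with (l y'); [apply resid1; apply HS; auto|].
        apply Bsup_ub; eauto.
      * intros l m Hl Hm y y'; apply meet_lemma; auto.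
    + intros mu [Z [tZ [f [H1 [H2 [Hf [l [Hl ->]]]]]]]] y y'.
      apply Ble_trans with (Omega tZ (f (rep y)) (f (rep y'))).
      * apply Bneg_swap; apply Bsup_ub.
        exists (fun p => Bneg (Omega tZ (f (rep (fst p))) (f (rep (snd p))))); split; auto.
        exists Z, tZ, f; auto.
      * apply Omega_lb; auto.
  - apply Bsup_lub; intros a [nu [[Z [tZ [f [H1 [H2 [Hf ->]]]]]] <-]]; simpl.
    apply Bneg_anti; apply omega_Z; auto.
Qed.

Lemma Y_R1 : R1 tY.
Proof.
  unfold R1, Bclosed.
  replace (fun x : Yt * Yt => Bneg (Omega tY (fst x) (snd x))) with sigma
    by (apply functional_extensionality; intro p; symmetry; apply key).
  apply (proj1 (proj2 (generated_top _))).
  intros nu [Z [tZ [f [H1 [H2 [Hf ->]]]]]].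
  pose (h := fun p : Yt * Yt => (f (rep (fst p)), f (rep (snd p)))).
  refine (cont_gen _ (prod_top tY) h (generated_top _) _
           (fun q : Z * Z => Bneg (Omega tZ (fst q) (snd q))) _); [| apply (proj2 H2)].
  intros s [[c ->] | [l [Hl [-> | ->]]]]; apply generated_incl.
  - left; exists c; reflexivity.
  - right; exists (fun y => l (f (rep y))); split; [apply (gen_in Z tZ); auto | left; reflexivity].
  - right; exists (fun y => l (f (rep y))); split; [apply (gen_in Z tZ); auto | right; reflexivity].
Qed.

End Refl.

Theorem mainTheorem16 :
  forall (X : Type) (tX : (X -> B4) -> Prop), Btopology tX ->
  exists (Y : Type) (tY : (Y -> B4) -> Prop) (eta : X -> Y),
    Btopology tY /\ Hausdorff tY /\ Bcontinuous tX tY eta /\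
    forall (Z : Type) (tZ : (Z -> B4) -> Prop), Btopology tZ -> Hausdorff tZ ->
    forall f : X -> Z, Bcontinuous tX tZ f ->
    exists! g : Y -> Z, Bcontinuous tY tZ g /\ (forall x, g (eta x) = f x).
Proof.
  intros X tX HX.
  exists (Yt X tX), (tY X tX), (eta X tX).
  split; [apply generated_top|]. split; [split; [apply Y_T0 | apply Y_R1]|].
  split; [apply eta_cont; auto|].
  intros Z tZ H1 H2 f Hf.
  exists (fun y => f (rep X tX y)); split; [split|].
  - intros l Hl; apply (gen_in X tX Z tZ); auto.
  - intro x; apply (f_rep X tX Z tZ); auto.
  - intros g' [Hg' E]; apply functional_extensionality; intro y.
    rewrite <- (eta_rep X tX y) at 2; rewrite E; reflexivity.
Qed.
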